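(* Let $\mathcal{G}_R(\mathcal{N}_R,\mathcal{E}_R)$ be an R-graph with ingress points $\mathcal{M}$ and parent-selection probabilities $p_{ij}$, and for $\mathcal{X}\subseteq\mathcal{N}_R$ let $$F(\mathcal{X})=E_P[\mathcal{NC}_R(\mathcal{X})]=\sum_{x\in\mathcal{M}^{|\mathcal{X}|}}\mathcal{NC}_R(\mathcal{X}\rhd x)\,P(\mathcal{X}\rhd x)$$ (as defined in the context). Then the set function $F$ is (i) non-negative and monotone (non-decreasing), (ii) not submodular in general, and (iii) not supermodular in general (i.e., there exist R-graphs for which $F$ is not submodular, and R-graphs for which $F$ is not supermodular).
   Context: An R-graph is a directed acyclic graph $\mathcal{G}_R(\mathcal{N}_R,\mathcal{E}_R)$ rooted at a destination node $n_{dst}$; an edge $j\to i$ means $i$ may use the routing path learned from its parent $j$; $P_i$ denotes the parents of $i$. $n_{dst}$ has a finite set $\mathcal{M}$ of ingress points, each child of $n_{dst}$ attached to exactly one. Each node $i$ selects a parent $j\in P_i$ with probability $p_{ij}$ ($\sum_{j\in P_i}p_{ij}=1$) and routes its traffic through the same ingress point as the selected parent; we write $i\rhd m$ if $i$ routes through ingress point $m$. For a set $\mathcal{X}$ of (measured) nodes and a vector $x\in\mathcal{M}^{|\mathcal{X}|}$, $\mathcal{X}\rhd x$ denotes the event that each node of $\mathcal{X}$ routes through the corresponding entry of $x$, and $P(\mathcal{X}\rhd x)$ is its probability. $\mathcal{NC}_R(\mathcal{X}\rhd x)=|\{i\in\mathcal{N}_R: f(i)\neq 0\mid \mathcal{X}\rhd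 x\}|$ is the number of nodes whose route is inferred with certainty (their route is determined, i.e., has probability $1$ for some ingress point) given the oracle $\mathcal{X}\rhd x$. A set function $F$ is submodular if $F(A\cup\{\epsilon\})-F(A)\ge F(B\cup\{\epsilon\})-F(B)$ for all $A\subseteq B$ and $\epsilon\notin B$, and supermodular if the reverse inequality always holds. *)

(* Defs.v *)
From HB Require Import structures.
From mathcomp Require Import all_boot all_order all_algebra.
Set Implicit Arguments. Unset Strict Implicit. Unset Printing Implicit Defensive.
Import Order.TTheory GRing.Theory Num.Theory.
Local Open Scope ring_scope.

(* An R-graph: nodes V (including the destination dst), parent relation
   par i j  <->  j \in P_i  (edge j -> i), ingress points M, ingress map
   ing (meaningful for children of dst), parent-selection probabilities p. *)
Record Rgraph (R : realFieldType) := RGraph {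
  node : finType;
  ingress : finType;
  dst : node;
  par : rel node;
  ing : node -> ingress;
  p : node -> node -> R;
  par_acyclic : forall i j, par i j -> ~~ connect par j i;
  dst_root : forall j, ~~ par dst j;
  p_ge0 : forall i j, par i j -> 0 <= p i j;
  p_sum1 : forall i, i != dst -> \sum_(j | par i j) p i j = 1
}.

Section Defs.
Variable R : realFieldType.
Variable G : Rgraph R.

Local Notation V := (node G).
Local Notation M := (ingress G).

(* A parent selection: sigma i is the parent selected by node i. *)
Definition selection := {ffun V -> V}.

Definition wsel (s : selection) : R :=
  \prod_(i | i != @dst R G) (if @par R G i (s i) then @p R G i (s i) else 0).

(* follow selected parents until reaching a node whose selected parent is dst *)
Definition step (s : selection) (i : V) : V :=
  if (i == @dst R G) || (s i == @dst R G) then i else s i.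

Definition route (s : selection) (i : V) : M :=
  @ing R G (iter #|V| (step s) i).

Definition Pr (E : pred selection) : R := \sum_(s | E s) wsel s.

Definition ev (X : {set V}) (x : {ffun {i : V | i \in X} -> M}) : pred selection :=
  fun s => [forall k, route s (val k) == x k].

Definition NC (X : {set V}) (x : {ffun {i : V | i \in X} -> M}) : nat :=
  #|[set i : V | (i != @dst R G) &&
      [exists m : M,
         Pr (fun s => ev x s && (route s i == m)) / Pr (ev x) == 1]]|.

Definition F (X : {set V}) : R :=
  \sum_(x : {ffun {i : V | i \in X} -> M}) (NC x)%:R * Pr (ev x).

Definition NR : {set V} := [set~ @dst R G].

End Defs.

Definition submodular_on (T : finType) (R : realFieldType)
  (N : {set T}) (f : {set T} -> R) : Prop :=
  forall (A B : {set T}) (e : T), A \subset B -> B \subset N ->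
    e \in N -> e \notin B ->
    f (e |: B) - f B <= f (e |: A) - f A.

Definition supermodular_on (T : finType) (R : realFieldType)
  (N : {set T}) (f : {set T} -> R) : Prop :=
  forall (A B : {set T}) (e : T), A \subset B -> B \subset N ->
    e \in N -> e \notin B ->
    f (e |: A) - f A <= f (e |: B) - f B.

(* Main.v *)
Require Import Defs.
From HB Require Import structures.
From mathcomp Require Import all_boot all_order all_algebra.
From mathcomp Require Import lra zify.
Set Implicit Arguments. Unset Strict Implicit. Unset Printing Implicit Defensive.
Import Order.TTheory GRing.Theory Num.Theory.
Local Open Scope ring_scope.

Section General.
Variable R : realFieldType.
Variable G : Rgraph R.
Local Notation V := (node G).
Local Notation M := (ingress G).
Local Notation dst := (@dst R G).
Local Notation sel := (selection G).
Local Notation wsel := (@wsel R G).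
Local Notation Pr := (@Pr R G).
Local Notation route := (@route R G).

Definition pos (s : selection G) :=
  [forall i, (i != dst) ==> (par i (s i) && (0 < p i (s i)))].

Lemma wsel_ge0 (s : sel) : 0 <= wsel s.
Proof.
rewrite /wsel; apply: prodr_ge0 => i _.
by case: ifP => // h; apply: p_ge0.
Qed.

Lemma wsel_gt0 (s : sel) : pos s -> 0 < wsel s.
Proof.
move=> /forallP ps; rewrite /wsel; apply: prodr_gt0 => i ni.
by move: (ps i); rewrite ni /= => /andP[-> ->].
Qed.

Lemma wsel_eq0 (s : sel) : ~~ pos s -> wsel s = 0.
Proof.
move=> /forallPn[i]; rewrite negb_imply => /andP[ni h].
rewrite /wsel (bigD1 i) //=; apply/eqP; rewrite mulf_eq0; apply/orP; left.
case: ifP h => //= hp; rewrite lt_def p_ge0 // andbT negbK => /eqP ->.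
by [].
Qed.

Lemma wsel_pos (s : sel) : (0 < wsel s) = pos s.
Proof.
apply/idP/idP; last exact: wsel_gt0.
by case: (boolP (pos s)) => // /wsel_eq0 ->; rewrite ltxx.
Qed.

Definition agree (X : {set V}) (s s' : selection G) :=
  [forall k, (k \in X) ==> (route s' k == route s k)].

Definition xs (X : {set V}) (s : selection G) : {ffun {i : V | i \in X} -> M} :=
  [ffun k => route s (val k)].

Lemma ev_xs X x (s : sel) : ev x s = (xs X s == x).
Proof.
apply/forallP/eqP => [h|<- k]; last by rewrite ffunE.
by apply/ffunP => k; rewrite ffunE; apply/eqP; apply: h.
Qed.

Lemma ev_agree X (s s' : sel) : ev (xs X s) s' = agree X s s'.
Proof.
apply/forallP/forallP => [h k|h k].
  apply/implyP => kX; move: (h (exist _ k kX)); by rewrite ffunE.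
by rewrite ffunE; move: (h (val k)); rewrite (valP k).
Qed.

Definition det (X : {set V}) (s : sel) (i : V) :=
  [exists m : M, Pr (fun s' => agree X s s' && (route s' i == m)) / Pr (agree X s) == 1].

Definition NC' (X : {set V}) (s : sel) := #|[set i : V | (i != dst) && det X s i]|.

Lemma NC_xs X (s : sel) : NC (xs X s) = NC' X s.
Proof.
rewrite /NC /NC' /det; apply: eq_card => i; rewrite !inE; congr (_ && _).
apply: eq_existsb => m.
congr (_ / _ == 1); apply: eq_bigl => s'; by rewrite ev_agree.
Qed.

Lemma F_sel (X : {set V}) : F X = \sum_s wsel s * (NC' X s)%:R.
Proof.
rewrite /F (partition_big (xs X) predT) //=.
apply: eq_bigr => x _; rewrite /Pr mulr_sumr.
apply: eq_big => s; first by rewrite ev_xs.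
move=> e; have /eqP <- : xs X s == x by rewrite -ev_xs.
by rewrite NC_xs mulrC.
Qed.


Lemma agree_refl (X : {set V}) (s : sel) : agree X s s.
Proof. by apply/forallP => k; apply/implyP. Qed.

Lemma agreeP (X : {set V}) (s s' : sel) : reflect (forall k, k \in X -> route s' k = route s k) (agree X s s').
Proof.
apply: (iffP forallP) => h k; first by move=> kX; apply/eqP; move/implyP: (h k); apply.
by apply/implyP => kX; rewrite h.
Qed.

Lemma Pr_ge0 (E : pred sel) : 0 <= Pr E.
Proof. by apply: sumr_ge0 => t _; apply: wsel_ge0. Qed.

Lemma det_char (X : {set V}) (s : sel) i : pos s ->
  det X s i <-> exists m, forall s' : sel, pos s' -> agree X s s' -> route s' i = m.
Proof.
move=> ps.
have Pgt : 0 < Pr (agree X s).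
  apply: (lt_le_trans (wsel_gt0 ps)); rewrite /Pr (bigD1 s) ?agree_refl //= lerDl.
  by apply: sumr_ge0 => *; apply: wsel_ge0.
have Pne : Pr (agree X s) != 0 by rewrite gt_eqF.
have split m : Pr (agree X s) = Pr (fun t => agree X s t && (route t i == m))
     + Pr (fun t => agree X s t && ~~ (route t i == m)).
  by rewrite /Pr (bigID (fun t => route t i == m)).
split.
  move=> /existsP[m /eqP h]; exists m => t pt at_.
  have e : Pr (fun t => agree X s t && (route t i == m)) = Pr (agree X s).
    by rewrite -[LHS](divfK Pne) h mul1r.
  have z : Pr (fun t => agree X s t && ~~ (route t i == m)) = 0.
    by have := split m; rewrite e => h0; lra.
  apply/eqP; apply/negPn/negP => ne.
  have := psumr_eq0P (fun t _ => wsel_ge0 t) z (i:=t); rewrite at_ ne => /(_ isT) w0.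
  by move: (wsel_gt0 pt); rewrite w0 ltxx.
move=> [m h]; apply/existsP; exists m; apply/eqP.
have z : Pr (fun t => agree X s t && ~~ (route t i == m)) = 0.
  apply: big1 => t /andP[at_ ne]; apply: wsel_eq0; apply/negP => pt.
  by move: ne; rewrite (h t pt at_) eqxx.
have e : Pr (fun t => agree X s t && (route t i == m)) = Pr (agree X s).
  by rewrite [RHS](split m) z addr0.
by rewrite e divff.
Qed.

Lemma det_mem (X : {set V}) (s : sel) i : pos s -> i \in X -> det X s i.
Proof.
move=> ps iX; apply/(det_char _ _ ps); exists (route s i) => t _ /agreeP h.
exact: h.
Qed.

Lemma det_mono (X Y : {set V}) (s : sel) i : pos s -> X \subset Y -> det X s i -> det Y s i.
Proof.
move=> ps XY /(det_char _ _ ps)[m h]; apply/(det_char _ _ ps); exists m => t pt /agreeP a.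
apply: h => //; apply/agreeP => k kX; apply: a; exact: (subsetP XY).
Qed.

Lemma det_not (X : {set V}) (s s1 s2 : sel) i : pos s -> pos s1 -> pos s2 ->
  agree X s s1 -> agree X s s2 -> route s1 i != route s2 i -> ~~ det X s i.
Proof.
move=> ps p1 p2 a1 a2 ne; apply/negP => /(det_char _ _ ps)[m h].
by move: ne; rewrite (h _ p1 a1) (h _ p2 a2) eqxx.
Qed.

Lemma NC'_mono (X Y : {set V}) (s : sel) : pos s -> X \subset Y -> (NC' X s <= NC' Y s)%N.
Proof.
move=> ps XY; apply: subset_leq_card; apply/subsetP => i; rewrite !inE.
by case/andP => -> /(det_mono ps XY).
Qed.

Lemma F_ge0 (X : {set V}) : 0 <= F X.
Proof.
rewrite F_sel; apply: sumr_ge0 => s _; apply: mulr_ge0; [exact: wsel_ge0| exact: ler0n].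
Qed.

Lemma F_mono (X Y : {set V}) : X \subset Y -> F X <= F Y.
Proof.
move=> XY; rewrite !F_sel; apply: ler_sum => s _.
case: (boolP (pos s)) => ps; last by rewrite wsel_eq0 // !mul0r.
by apply: ler_wpM2l; [exact: wsel_ge0| rewrite ler_nat; exact: NC'_mono].
Qed.

Lemma F_add (X Y : {set V}) : F X + F Y = \sum_s wsel s * ((NC' X s + NC' Y s)%N)%:R.
Proof.
rewrite !F_sel -big_split /=; apply: eq_bigr => s _; by rewrite natrD mulrDr.
Qed.

Lemma sum_lt (f g : sel -> nat) (s0 : sel) :
  (forall s, pos s -> (f s <= g s)%N) -> pos s0 -> (f s0 < g s0)%N ->
  \sum_s wsel s * (f s)%:R < \sum_s wsel s * (g s)%:R.
Proof.
move=> h p0 lt0; rewrite (bigD1 s0) // [X in _ < X](bigD1 s0) //=.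
apply: ltr_leD; first by rewrite ltr_pM2l ?ltr_nat // wsel_gt0.
apply: ler_sum => s _; case: (boolP (pos s)) => ps; last by rewrite wsel_eq0 // !mul0r.
by apply: ler_wpM2l; [exact: wsel_ge0| rewrite ler_nat; exact: h].
Qed.
End General.

Inductive nd := D | A | U | V | W.
Definition nd_eqb (x y : nd) := match x, y with
  | D, D | A, A | U, U | V, V | W, W => true | _, _ => false end.
Lemma nd_eqP : Equality.axiom nd_eqb. Proof. by case; case; constructor. Qed.
HB.instance Definition _ := hasDecEq.Build nd nd_eqP.
Definition nd2o (x : nd) : 'I_5 := match x with
 | D => inord 0 | A => inord 1 | U => inord 2 | V => inord 3 | W => inord 4 end.
Definition o2nd (i : 'I_5) : nd := match val i with
 | 0 => D | 1 => A | 2 => U | 3 => V | _ => W end.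
Lemma nd2oK : cancel nd2o o2nd. Proof. by case; rewrite /o2nd /= inordK. Qed.
HB.instance Definition _ : hasChoice nd := CanHasChoice nd2oK.
HB.instance Definition _ : isCountable nd := CanIsCountable nd2oK.
HB.instance Definition _ : isFinite nd := CanIsFinite nd2oK.
Lemma o2ndK : cancel o2nd nd2o.
Proof. case=> [[|[|[|[|[|k]]]]] Hk] //; apply: val_inj; rewrite /= inordK //. Qed.
Lemma card_nd : #|{: nd}| = 5%N.
Proof. have h : bijective nd2o by exists o2nd; [exact: nd2oK| exact: o2ndK].
by rewrite (bij_eq_card h) card_ord. Qed.

Lemma card_le (S : {set nd}) (sq : seq nd) :
  (forall x, x \in S -> x \in sq) -> (#|S| <= size sq)%N.
Proof. move=> h; apply: leq_trans (card_size sq); apply: subset_leq_card; apply/subsetP => x; exact: h. Qed.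

Lemma card_ge (S : {set nd}) (sq : seq nd) :
  uniq sq -> (forall x, x \in sq -> x \in S) -> (size sq <= #|S|)%N.
Proof. move=> /card_uniqP <- h; apply: subset_leq_card; apply/subsetP => x; exact: h. Qed.

Definition parn (i j : nd) : bool := match i, j with
  | A, D | U, D | U, A | V, D | V, A | W, U | W, V => true | _, _ => false end.
Definition ingn (i : nd) : bool := match i with U | V => true | _ => false end.
Definition rk (i : nd) : nat := match i with D => 0 | A => 1 | U | V => 2 | W => 3 end.

Lemma parn_rk i j : parn i j -> (rk j < rk i)%N.
Proof. by case: i; case: j. Qed.

Lemma connect_rk i j : connect parn j i -> (rk i <= rk j)%N.
Proof.
move/connectP=> [q pth ->]; elim: q j pth => //= y q IH j /andP[e pth].
exact: leq_trans (IH _ pth) (ltnW (parn_rk e)).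
Qed.

Section Ex.
Variable R : realFieldType.

Definition pn (i j : nd) : R := match i with A => 1 | _ => 2^-1 end.

Lemma half_gt0 : 0 < 2^-1 :> R. Proof. by rewrite invr_gt0 ltr0n. Qed.
Lemma half_half : 2^-1 + 2^-1 = 1 :> R.
Proof. lra. Qed.

Lemma ac i j : parn i j -> ~~ connect parn j i.
Proof. move=> e; apply/negP => /connect_rk; by rewrite leqNgt parn_rk. Qed.
Lemma rt j : ~~ parn D j. Proof. by case: j. Qed.
Lemma pge i j : parn i j -> 0 <= pn i j.
Proof. by case: i => _ //=; rewrite ?ler01 // ltW // half_gt0. Qed.
Lemma psum i : i != D -> \sum_(j | parn i j) pn i j = 1.
Proof.
case: i => // _.
- rewrite (bigD1 D) //= big_pred0 ?addr0 //; by case.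
- rewrite (bigD1 D) //= (bigD1 A) //= big_pred0 ?addr0 ?half_half //; by case.
- rewrite (bigD1 D) //= (bigD1 A) //= big_pred0 ?addr0 ?half_half //; by case.
- rewrite (bigD1 U) //= (bigD1 V) //= big_pred0 ?addr0 ?half_half //; by case.
Qed.

Definition G2 : Rgraph R := @RGraph R nd bool D parn ingn pn ac rt pge psum.

End Ex.
Section Ex2.
Variable R : realFieldType.
Local Notation G := (G2 R).
Local Notation sel := (selection G).
Local Notation route := (@route R G).
Local Notation det := (@det R G).
Local Notation NC' := (@NC' R G).
Local Notation agree := (@agree R G).
Local Notation pos := (@pos R G).

Lemma posA (s : sel) : pos s -> s A = D.
Proof. by move/forallP/(_ A) => /=; case: (s A). Qed.
Lemma posU (s : sel) : pos s -> s U = D \/ s U = A.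
Proof. by move/forallP/(_ U) => /=; case: (s U) => //; auto. Qed.
Lemma posV (s : sel) : pos s -> s V = D \/ s V = A.
Proof. by move/forallP/(_ V) => /=; case: (s V) => //; auto. Qed.
Lemma posW (s : sel) : pos s -> s W = U \/ s W = V.
Proof. by move/forallP/(_ W) => /=; case: (s W) => //; auto. Qed.

Definition routeb (cu cv cw : bool) (i : nd) : bool :=
  match i with D | A => false | U => cu | V => cv | W => if cw then cu else cv end.

Lemma route_pos (s : sel) : pos s -> forall i,
  route s i = routeb (s U == D) (s V == D) (s W == U) i.
Proof.
move=> ps; have hA := posA ps.
case: (posU ps) => hU; case: (posV ps) => hV; case: (posW ps) => hW;
case; rewrite /Defs.route card_nd /= /step /= ?hA ?hU ?hV ?hW /= ?hA ?hU ?hV ?hW /=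
  ?hA ?hU ?hV ?hW /= ?hA ?hU ?hV ?hW /= //.
Qed.

Definition mk (cu cv cw : bool) : sel := [ffun i => match i with
  | D | A => D | U => if cu then D else A | V => if cv then D else A
  | W => if cw then U else V end].

Lemma pos_mk cu cv cw : pos (mk cu cv cw).
Proof.
apply/forallP => i; rewrite ffunE.
by case: i; case: cu; case: cv; case: cw; rewrite /= ?ltr01 ?half_gt0.
Qed.

Lemma route_mk cu cv cw i : route (mk cu cv cw) i = routeb cu cv cw i.
Proof. by rewrite route_pos ?pos_mk // !ffunE; case: cu; case: cv; case: cw. Qed.

Lemma detA (X : {set nd}) (s : sel) : pos s -> det X s A.
Proof.
move=> ps; apply/(det_char _ _ ps); exists false => t pt _; by rewrite route_pos.
Qed.

Lemma in_NC (X : {set nd}) (s : sel) i : i != D -> det X s i -> i \in [set i : nd | (i != D) && det X s i].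
Proof. by move=> ni di; rewrite inE ni. Qed.

Lemma NC0_le (s : sel) : pos s -> (NC' set0 s <= 1)%N.
Proof.
move=> ps; apply: (@card_le _ [:: A]) => i; rewrite inE => /andP[ni di].
have a1 : agree set0 s (mk true true true) by apply/agreeP => k; rewrite inE.
have a2 : agree set0 s (mk false false true) by apply/agreeP => k; rewrite inE.
case: i ni di => // _ di; exfalso; move: di; apply/negP;
 apply: (det_not ps (pos_mk _ _ _) (pos_mk _ _ _) a1 a2); by rewrite !route_mk.
Qed.

Lemma NC0_ge (s : sel) : pos s -> (1 <= NC' set0 s)%N.
Proof.
move=> ps; apply: (@card_ge _ [:: A]) => // i; rewrite inE => /eqP ->.
by rewrite ?inE /=; apply: detA.
Qed.

Lemma NCW_ge (s : sel) : pos s -> (2 <= NC' (W |: set0) s)%N.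
Proof.
move=> ps; apply: (@card_ge _ [:: A; W]) => // i; rewrite !inE => /orP[] /eqP ->.
  by rewrite ?inE /=; apply: detA.
by rewrite ?inE /=; apply: det_mem => //; rewrite !inE.
Qed.

Lemma NCall_le (X : {set nd}) (s : sel) : (NC' X s <= 4)%N.
Proof.
apply: (@card_le _ [:: A; U; V; W]) => i; rewrite inE => /andP[ni _].
by case: i ni.
Qed.

Lemma NCUV_ge (X : {set nd}) (s : sel) : pos s -> U \in X -> V \in X -> (3 <= NC' X s)%N.
Proof.
move=> ps hu hv; apply: (@card_ge _ [:: A; U; V]) => // i; rewrite !inE => /or3P[] /eqP ->.
- by rewrite ?inE /=; apply: detA.
- by rewrite ?inE /=; apply: det_mem.
- by rewrite ?inE /=; apply: det_mem.
Qed.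

Definition s0 := mk true true true.

Lemma NCUV_s0 (X : {set nd}) : U \in X -> V \in X -> (4 <= NC' X s0)%N.
Proof.
have ps := pos_mk true true true.
move=> hu hv; apply: (@card_ge _ [:: A; U; V; W]) => // i; rewrite !inE => /or4P[] /eqP ->.
- by rewrite ?inE /=; apply: detA.
- by rewrite ?inE /=; apply: det_mem.
- by rewrite ?inE /=; apply: det_mem.
rewrite ?inE /=; apply/(det_char _ _ ps); exists true => t pt /agreeP h.
have eu := h U hu; have ev := h V hv.
move: eu ev; rewrite !route_pos ?pos_mk // !ffunE /=.
by move=> -> ->; case: ifP.
Qed.

Lemma NCV_le (s : sel) : pos s -> (NC' (V |: set0) s <= 2)%N.
Proof.
move=> ps; apply: (@card_le _ [:: A; V]) => i; rewrite inE => /andP[ni di].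
have a1 : agree (V |: set0) s (mk true (s V == D) true).
  by apply/agreeP => k; rewrite !inE ?orbF => /eqP ->; rewrite route_mk route_pos.
have a2 : agree (V |: set0) s (mk false (s V == D) true).
  by apply/agreeP => k; rewrite !inE ?orbF => /eqP ->; rewrite route_mk route_pos.
case: i ni di => // _ di; exfalso; move: di; apply/negP;
 apply: (det_not ps (pos_mk _ _ _) (pos_mk _ _ _) a1 a2); by rewrite !route_mk.
Qed.

Lemma NCU_le (s : sel) : pos s -> (NC' [set U] s <= 2)%N.
Proof.
move=> ps; apply: (@card_le _ [:: A; U]) => i; rewrite inE => /andP[ni di].
have a1 : agree [set U] s (mk (s U == D) true false).
  by apply/agreeP => k; rewrite !inE ?orbF => /eqP ->; rewrite route_mk route_pos.
have a2 : agree [set U] s (mk (s U == D) false false).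
  by apply/agreeP => k; rewrite !inE ?orbF => /eqP ->; rewrite route_mk route_pos.
case: i ni di => // _ di; exfalso; move: di; apply/negP;
 apply: (det_not ps (pos_mk _ _ _) (pos_mk _ _ _) a1 a2); by rewrite !route_mk.
Qed.

Local Notation FF := (@F R G).

Lemma not_sub : ~ submodular_on (NR G) FF.
Proof.
move=> H.
have sU : [set U] \subset NR G by apply/subsetP => x; rewrite !inE => /eqP ->.
have nV : V \in NR G by rewrite !inE.
have nVU : V \notin [set U] by rewrite !inE.
have h := H set0 [set U] V (sub0set _) sU nV nVU.
have hlt : FF (V |: set0) + FF [set U] < FF (V |: [set U]) + FF set0.
  rewrite !F_add; apply: (@sum_lt _ _ _ _ s0); last first.
  - have p0 : pos s0 := pos_mk true true true.
    have := NCV_le p0; have := NCU_le p0; have := NC0_ge p0.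
    have := @NCUV_s0 (V |: [set U]); rewrite !inE !eqxx ?orbT => /(_ isT isT).
    lia.
  - exact: pos_mk.
  move=> s ps.
  have := NCV_le ps; have := NCU_le ps; have := NC0_ge ps.
  have := @NCUV_ge (V |: [set U]) s ps; rewrite !inE !eqxx ?orbT => /(_ isT isT).
  lia.
lra.
Qed.

Lemma not_sup : ~ supermodular_on (NR G) FF.
Proof.
move=> H.
have sUV : [set U; V] \subset NR G by apply/subsetP => x; rewrite !inE => /orP[] /eqP ->.
have nW : W \in NR G by rewrite !inE.
have nWUV : W \notin [set U; V] by rewrite !inE.
have h := H set0 [set U; V] W (sub0set _) sUV nW nWUV.
have hlt : FF (W |: [set U; V]) + FF set0 < FF (W |: set0) + FF [set U; V].
  rewrite !F_add; apply: (@sum_lt _ _ _ _ s0); last first.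
  - have p0 : pos s0 := pos_mk true true true.
    have := NCW_ge p0; have := NC0_le p0; have := NCall_le (W |: [set U; V]) s0.
    have := @NCUV_s0 [set U; V]; rewrite !inE !eqxx ?orbT => /(_ isT isT).
    lia.
  - exact: pos_mk.
  move=> s ps.
  have := NCW_ge ps; have := NC0_le ps; have := NCall_le (W |: [set U; V]) s.
  have := @NCUV_ge [set U; V] s ps; rewrite !inE !eqxx ?orbT => /(_ isT isT).
  lia.
lra.
Qed.

End Ex2.

Theorem lemma4p1 (R : realFieldType) :
  (forall G : Rgraph R,
     (forall X : {set node G}, X \subset NR G -> 0 <= F X) /\
     (forall X Y : {set node G}, X \subset Y -> Y \subset NR G -> F X <= F Y))
  /\ (exists G : Rgraph R, ~ submodular_on (NR G) (@F R G))
  /\ (exists G : Rgraph R, ~ supermodular_on (NR G) (@F R G)).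
Proof.
split; [|split].
- move=> G; split; first by move=> X _; apply: F_ge0.
  by move=> X Y XY _; apply: F_mono.
- by exists (G2 R); apply: not_sub.
- by exists (G2 R); apply: not_sup.
Qed.
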